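(* Let $\mathcal{M}_R$ be a rule that assigns a probability $\mathcal{M}_R(r;F)\in[0,1]$ to each root $r$ of every forest $F\in\mathcal{F}^N$. Then there is at most one incentive-compatible selection mechanism $\mathcal{M}$ such that $\mathcal{M}(r;F)=\mathcal{M}_R(r;F)$ for every forest $F$ and every root $r$ of $F$.
   Context: Let $N$ be a finite set of vertices. A directed forest on $N$ is a directed acyclic graph on $N$ with every out-degree at most $1$; $\mathcal{F}^N$ is the set of such forests; roots are vertices with no out-edge. A selection mechanism is a function $\mathcal{M}:N\times\mathcal{F}^N\to[0,1]$ with $\sum_x\mathcal{M}(x;F)\le1$ for all $F$. It is incentive-compatible if $\mathcal{M}(x;F)=\mathcal{M}(x;F')$ whenever $F,F'$ differ only in the out-edge of $x$. *)

(* Defs.v *)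
From mathcomp Require Import all_boot all_order all_algebra.
Set Implicit Arguments. Unset Strict Implicit. Unset Printing Implicit Defensive.
Import Order.TTheory GRing.Theory Num.Theory.

(* A graph on the finite vertex set N with every out-degree at most 1 is
   encoded by its out-edge function: F x = Some y iff x -> y is an edge,
   F x = None iff x has no out-edge. *)
Definition graph (N : finType) := {ffun N -> option N}.

Fixpoint follow (N : finType) (F : graph N) (k : nat) (x : N) : option N :=
  match k with
  | 0 => Some x
  | k'.+1 => obind F (follow F k' x)
  end.

Definition is_forest (N : finType) (F : graph N) : Prop :=
  forall (x : N) (k : nat), (0 < k)%N -> follow F k x <> Some x.

Definition is_root (N : finType) (F : graph N) (r : N) : Prop := F r = None.

Local Open Scope ring_scope.

Definition selection_mechanism (R : realFieldType) (N : finType)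
    (M : N -> graph N -> R) : Prop :=
  forall F : graph N, is_forest F ->
    (forall x, 0 <= M x F <= 1) /\ \sum_(x : N) M x F <= 1.

Definition differ_only_at (N : finType) (x : N) (F F' : graph N) : Prop :=
  forall y, y != x -> F y = F' y.

Definition incentive_compatible (R : realFieldType) (N : finType)
    (M : N -> graph N -> R) : Prop :=
  forall (x : N) (F F' : graph N), is_forest F -> is_forest F' ->
    differ_only_at x F F' -> M x F = M x F'.

(* Main.v *)
Require Import Defs.
From mathcomp Require Import all_boot all_order all_algebra.
Import Order.TTheory GRing.Theory Num.Theory.
Set Implicit Arguments. Unset Strict Implicit.
Local Open Scope ring_scope.

Definition cut (N : finType) (F : graph N) (x : N) : graph N :=
  [ffun y => if y == x then None else F y].

Lemma follow_cut (N : finType) (F : graph N) (x : N) k z w :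
  follow (cut F x) k z = Some w -> follow F k z = Some w.
Proof.
elim: k w => [|k IH] w //=.
case E: (follow (cut F x) k z) => [u|] //= H.
rewrite (IH u E) /=.
move: H; rewrite /cut ffunE; by case: (u == x).
Qed.

Lemma cut_forest (N : finType) (F : graph N) (x : N) :
  is_forest F -> is_forest (cut F x).
Proof. move=> HF z k Hk H; exact: (HF z k Hk (follow_cut H)). Qed.

Lemma cut_root (N : finType) (F : graph N) (x : N) : is_root (cut F x) x.
Proof. by rewrite /is_root /cut ffunE eqxx. Qed.

Lemma cut_diff (N : finType) (F : graph N) (x : N) : differ_only_at x F (cut F x).
Proof. move=> y Hy; by rewrite /cut ffunE (negbTE Hy). Qed.

Theorem corollary1 (R : realFieldType) (N : finType)
    (MR : N -> graph N -> R)
    (hMR : forall (F : graph N) (r : N), is_forest F -> is_root F r ->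
             0 <= MR r F <= 1)
    (M1 M2 : N -> graph N -> R) :
  selection_mechanism M1 -> incentive_compatible M1 ->
  (forall (F : graph N) (r : N), is_forest F -> is_root F r -> M1 r F = MR r F) ->
  selection_mechanism M2 -> incentive_compatible M2 ->
  (forall (F : graph N) (r : N), is_forest F -> is_root F r -> M2 r F = MR r F) ->
  forall (x : N) (F : graph N), is_forest F -> M1 x F = M2 x F.
Proof.
move=> _ IC1 E1 _ IC2 E2 x F HF.
have HF' := @cut_forest _ F x HF.
rewrite (IC1 x F (cut F x) HF HF' (@cut_diff _ F x)).
rewrite (IC2 x F (cut F x) HF HF' (@cut_diff _ F x)).
by rewrite E1 ?E2 //; apply: cut_root.
Qed.
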